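(* Let $m\ge2$. The problem $-\psi''+Q\psi=0$ on $\Omega$, $\psi\in H^2(\Omega)\cap K(\Omega)$, admits $m$ linearly independent solutions if and only if at least $m+1$ of the $n$ problems \[ -z''+Qz=0\ \text{on}\ \omega_i,\qquad z(a)=0,\qquad \frac{\mathrm dz}{\mathrm d\omega_i}(a_i)=0,\qquad i=1,\dots,n, \] have nontrivial solutions.
   Context: $\Omega$ is a compact star graph with $n$ edges $\omega_i=[0,a_i]$, $a_i>0$, joined at a central vertex $a$ (corresponding to $0$); $a_i$ also denotes the free endpoint of $\omega_i$. Functions on $\Omega$ are tuples $(\psi_{\omega_1},\dots,\psi_{\omega_n})$, $H^2(\Omega)=\bigoplus_iH^2(0,a_i)$, $\frac{\mathrm dz}{\mathrm d\omega_i}(a_i):=z'_{\omega_i}(a_i)$, and on a single edge $z(a)$ means $z_{\omega_i}(0)$. $K(\Omega)$ is the set of functions satisfying the Kirchhoff conditions at $a$ ($\psi_{\omega_1}(0)=\dots=\psi_{\omega_n}(0)$, $\sum_i\psi'_{\omega_i}(0)=0$) and the Neumann conditions $\psi'_{\omega_j}(a_j)=0$ at every endpoint. $Q\in L^\infty(\Omega)$ is real-valued. *)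

(* Defs.v *)
From Stdlib Require Import Reals.
Open Scope R_scope.

Fixpoint sumR (f : nat -> R) (n : nat) : R :=
  match n with O => 0 | S k => sumR f k + f k end.

Definition outer_le (E : R -> Prop) (eps : R) : Prop :=
  exists l r : nat -> R,
    (forall k, l k <= r k) /\
    (forall x, E x -> exists k, l k < x < r k) /\
    (forall K, sumR (fun k => r k - l k) K <= eps).

Definition null_set (E : R -> Prop) : Prop :=
  forall eps, 0 < eps -> outer_le E eps.

Definition open_set (G : R -> Prop) : Prop :=
  forall x, G x -> exists r, 0 < r /\ forall y, Rabs (y - x) < r -> G y.

Definition leb_measurable (E : R -> Prop) : Prop :=
  forall eps, 0 < eps ->
    exists G, open_set G /\ (forall x, E x -> G x) /\
              outer_le (fun x => G x /\ ~ E x) eps.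

(* f restricted to [0,a] is Lebesgue measurable and essentially bounded:
   (the restriction of) f is in L^infinity(0,a) *)
Definition Linf_on (a : R) (f : R -> R) : Prop :=
  (forall c, leb_measurable (fun x => 0 <= x <= a /\ c < f x)) /\
  (exists M, null_set (fun x => 0 <= x <= a /\ M < Rabs (f x))).

(* f has derivative l at x relative to [lo,hi] (one-sided at endpoints) *)
Definition has_deriv_within (lo hi : R) (f : R -> R) (x l : R) : Prop :=
  forall eps, 0 < eps -> exists delta, 0 < delta /\
    forall y, lo <= y <= hi -> y <> x -> Rabs (y - x) < delta ->
      Rabs ((f y - f x) / (y - x) - l) < eps.

Definition abs_cont_on (lo hi : R) (f : R -> R) : Prop :=
  forall eps, 0 < eps -> exists delta, 0 < delta /\
    forall (N : nat) (l r : nat -> R),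
      (forall k, (k < N)%nat -> lo <= l k <= r k /\ r k <= hi) ->
      (forall k, (S k < N)%nat -> r k <= l (S k)) ->
      sumR (fun k => r k - l k) N < delta ->
      sumR (fun k => Rabs (f (r k) - f (l k))) N < eps.

(* z (continuous representative) lies in H^2(0,a), with derivative dz on
   [0,a], and solves -z'' + q z = 0 a.e. on (0,a):
   z is C^1 on [0,a] with derivative dz, dz is absolutely continuous, and
   dz' = q z almost everywhere. *)
Definition edge_sol (q : R -> R) (a : R) (z dz : R -> R) : Prop :=
  (forall x, 0 <= x <= a -> has_deriv_within 0 a z x (dz x)) /\
  abs_cont_on 0 a dz /\
  null_set (fun x => 0 <= x <= a /\ ~ has_deriv_within 0 a dz x (q x * z x)).

(* psi (edges psi i, i < n) is in H^2(Omega) /\ K(Omega) and solves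
   -psi'' + Q psi = 0 on the star graph *)
Definition graph_sol (n : nat) (a : nat -> R) (Q : nat -> R -> R)
    (psi : nat -> R -> R) : Prop :=
  exists dpsi : nat -> R -> R,
    (forall i, (i < n)%nat -> edge_sol (Q i) (a i) (psi i) (dpsi i)) /\
    (forall i j, (i < n)%nat -> (j < n)%nat -> psi i 0 = psi j 0) /\
    sumR (fun i => dpsi i 0) n = 0 /\
    (forall j, (j < n)%nat -> dpsi j (a j) = 0).

(* the edge problem on omega_i: -z''+Qz=0, z(a)=0, z'(a_i)=0, has a
   nontrivial solution *)
Definition edge_problem_nontrivial (q : R -> R) (a : R) : Prop :=
  exists z dz, edge_sol q a z dz /\ z 0 = 0 /\ dz a = 0 /\
    exists x, 0 <= x <= a /\ z x <> 0.

Definition lin_indep (n : nat) (a : nat -> R) (m : nat)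
    (psis : nat -> nat -> R -> R) : Prop :=
  forall c : nat -> R,
    (forall i x, (i < n)%nat -> 0 <= x <= a i ->
       sumR (fun k => c k * psis k i x) m = 0) ->
    forall k, (k < m)%nat -> c k = 0.

(* Main.v *)
Require Import Defs.
From Stdlib Require Import Reals Lra Lia Classical FunctionalExtensionality.
Open Scope R_scope.

Lemma sumR_ext f g n : (forall k, (k < n)%nat -> f k = g k) -> sumR f n = sumR g n.
Proof. induction n; simpl; intros H; auto. rewrite IHn by (intros; apply H; lia). rewrite H by lia; auto. Qed.

Lemma sumR_plus f g n : sumR (fun k => f k + g k) n = sumR f n + sumR g n.
Proof. induction n; simpl; [lra|]. rewrite IHn; ring. Qed.

Lemma sumR_scal c f n : sumR (fun k => c * f k) n = c * sumR f n.
Proof. induction n; simpl; [ring|]. rewrite IHn; ring. Qed.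

Lemma sumR_le f g n : (forall k, (k < n)%nat -> f k <= g k) -> sumR f n <= sumR g n.
Proof. induction n; simpl; intros H; [lra|]. assert (H1 := H n ltac:(lia)). assert (sumR f n <= sumR g n) by (apply IHn; intros; apply H; lia). lra. Qed.

Lemma sumR_zero f n : (forall k, (k < n)%nat -> f k = 0) -> sumR f n = 0.
Proof. induction n; simpl; intros H; [lra|]. rewrite IHn by (intros; apply H; lia). rewrite H by lia; ring. Qed.

Lemma sumR_single f n p : (p < n)%nat -> (forall k, (k < n)%nat -> k <> p -> f k = 0) -> sumR f n = f p.
Proof.
  induction n; simpl; intros Hp H; [lia|].
  destruct (Nat.eq_dec p n) as [->|Hne].
  - rewrite sumR_zero; [ring|]. intros; apply H; lia.
  - rewrite IHn by (try lia; intros; apply H; lia). rewrite (H n) by lia. ring.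
Qed.

Lemma sumR_swap (F : nat -> nat -> R) n m :
  sumR (fun i => sumR (fun k => F i k) m) n = sumR (fun k => sumR (fun i => F i k) n) m.
Proof.
  induction n; simpl.
  - symmetry; apply sumR_zero; auto.
  - rewrite IHn. rewrite <- sumR_plus. reflexivity.
Qed.

Lemma sumR_abs f n : Rabs (sumR f n) <= sumR (fun k => Rabs (f k)) n.
Proof. induction n; simpl. rewrite Rabs_R0; lra. eapply Rle_trans; [apply Rabs_triang|]. lra. Qed.

Lemma sumR_nonneg f n : (forall k, (k < n)%nat -> 0 <= f k) -> 0 <= sumR f n.
Proof. induction n; simpl; intros H; [lra|]. assert (H1 := H n ltac:(lia)). assert (0 <= sumR f n) by (apply IHn; intros; apply H; lia). lra. Qed.

Lemma sumR_mono_n f n n' : (forall k, 0 <= f k) -> (n <= n')%nat -> sumR f n <= sumR f n'.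
Proof. intros H Hn. induction Hn; simpl; [lra|]. specialize (H m). lra. Qed.

Lemma null_subset (E F : R -> Prop) : null_set F -> (forall x, E x -> F x) -> null_set E.
Proof.
  intros HF HEF eps He. destruct (HF eps He) as [l [r [H1 [H2 H3]]]].
  exists l, r; repeat split; auto.
Qed.

Lemma sumR_interleave (f g : nat -> R) K :
  sumR (fun k => if Nat.even k then f (Nat.div2 k) else g (Nat.div2 k)) (2 * K) = sumR f K + sumR g K.
Proof.
  induction K. simpl; lra.
  replace (2 * S K)%nat with (S (S (2 * K))) by lia.
  change (sumR ?F (S (S ?n))) with (sumR F n + F n + F (S n)).
  rewrite IHK.
  replace (Nat.even (S (2*K))) with false.
  2:{ rewrite Nat.even_succ, Nat.odd_mul; reflexivity. }
  replace (Nat.even (2*K)) with true.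
  2:{ rewrite Nat.even_mul; reflexivity. }
  replace (Nat.div2 (S (2*K))) with K.
  2:{ symmetry; apply Nat.div2_succ_double. }
  replace (Nat.div2 (2*K)) with K.
  2:{ symmetry; apply Nat.div2_double. }
  simpl. ring.
Qed.

Lemma null_union (E F : R -> Prop) : null_set E -> null_set F -> null_set (fun x => E x \/ F x).
Proof.
  intros HE HF eps He.
  destruct (HE (eps/2) ltac:(lra)) as [l1 [r1 [A1 [B1 C1]]]].
  destruct (HF (eps/2) ltac:(lra)) as [l2 [r2 [A2 [B2 C2]]]].
  exists (fun k => if Nat.even k then l1 (Nat.div2 k) else l2 (Nat.div2 k)).
  exists (fun k => if Nat.even k then r1 (Nat.div2 k) else r2 (Nat.div2 k)).
  split; [|split].
  - intros k; destruct (Nat.even k); auto.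
  - intros x [Hx|Hx].
    + destruct (B1 x Hx) as [k Hk]. exists (2*k)%nat.
      rewrite Nat.even_mul, Nat.div2_double; auto.
    + destruct (B2 x Hx) as [k Hk]. exists (S (2*k))%nat.
      rewrite Nat.even_succ, Nat.odd_mul, Nat.div2_succ_double; auto.
  - intros K.
    eapply Rle_trans.
    + apply (sumR_mono_n _ K (2*K)); [|lia].
      intros k; destruct (Nat.even k); [specialize (A1 (Nat.div2 k))|specialize (A2 (Nat.div2 k))]; lra.
    + assert (E1 : sumR (fun k => (if Nat.even k then r1 (Nat.div2 k) else r2 (Nat.div2 k)) -
       (if Nat.even k then l1 (Nat.div2 k) else l2 (Nat.div2 k))) (2*K) =
       sumR (fun k => if Nat.even k then (fun j => r1 j - l1 j) (Nat.div2 k) else (fun j => r2 j - l2 j) (Nat.div2 k)) (2*K)).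
      { apply sumR_ext; intros; destruct (Nat.even k); auto. }
      pose proof (sumR_interleave (fun j => r1 j - l1 j) (fun j => r2 j - l2 j) K) as E2.
      cbv beta in E1, E2. rewrite E1, E2. specialize (C1 K); specialize (C2 K); lra.
Qed.

Definition fine_part (al t : R) (G : R -> R -> R -> Prop) : Prop :=
  exists p (u c : nat -> R), u 0%nat = al /\ u p = t /\
    forall i, (i < p)%nat -> u i <= c i <= u (S i) /\ G (c i) (u i) (u (S i)).

Lemma fine_ext al t s s' G : fine_part al t G -> t <= s <= s' -> G s t s' -> fine_part al s' G.
Proof.
  intros [p [u [c [H0 [Hp H]]]]] Hs HG.
  exists (S p), (fun i => if (i <=? p)%nat then u i else s'), (fun i => if (i <? p)%nat then c i else s).
  split; [|split].
  - simpl. auto.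
  - rewrite (proj2 (Nat.leb_nle (S p) p)) by lia. auto.
  - intros i Hi.
    destruct (Nat.eq_dec i p) as [->|Hne].
    + rewrite Nat.leb_refl, Nat.ltb_irrefl, (proj2 (Nat.leb_nle (S p) p)) by lia. rewrite Hp; split; [lra|auto].
    + rewrite (proj2 (Nat.leb_le i p)), (proj2 (Nat.ltb_lt i p)), (proj2 (Nat.leb_le (S i) p)) by lia.
      apply H; lia.
Qed.

Lemma cousin (al be : R) (G : R -> R -> R -> Prop) : al <= be ->
  (forall x, al <= x <= be -> exists d, 0 < d /\ forall u v, al <= u -> u <= x -> x <= v -> v <= be -> v - u < d -> G x u v) ->
  fine_part al be G.
Proof.
  intros Hab Hg.
  set (E := fun t => al <= t <= be /\ fine_part al t G).
  assert (HE : bound E) by (exists be; intros t [Ht _]; lra).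
  assert (HE0 : exists t, E t).
  { exists al. split; [lra|]. exists 0%nat, (fun _ => al), (fun _ => al). repeat split; auto; intros; lia. }
  destruct (completeness E HE HE0) as [s [Hub Hlub]].
  assert (Has : al <= s) by (apply Hub; split; [lra|]; exists 0%nat, (fun _ => al), (fun _ => al); repeat split; auto; intros; lia).
  assert (Hsb : s <= be) by (apply Hlub; intros t [Ht _]; lra).
  destruct (Hg s ltac:(lra)) as [d [Hd Hgd]].
  assert (Ht : exists t, E t /\ s - d < t).
  { apply NNPP; intro Hn. assert (s <= s - d); [|lra].
    apply Hlub. intros t Et. apply Rnot_lt_le. intro Hlt. apply Hn. exists t; auto. }
  destruct Ht as [t [[Ht Pt] Htd]].
  assert (Hts : t <= s) by (apply Hub; split; auto).
  assert (Ps : fine_part al s G).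
  { apply (fine_ext al t s s G Pt); [lra|]. apply Hgd; lra. }
  destruct (Rle_lt_or_eq_dec s be Hsb) as [Hlt|Heq].
  - exfalso.
    set (s' := Rmin be (s + d/2)).
    assert (Hs' : s < s' <= be) by (unfold s'; apply Rmin_case_strong; intros; lra).
    assert (Es' : E s').
    { split; [lra|]. apply (fine_ext al s s s' G Ps); [lra|]. apply Hgd; try lra.
      unfold s'; apply Rmin_case_strong; intros; lra. }
    assert (s' <= s) by (apply Hub; auto). lra.
  - subst; auto.
Qed.

Lemma le_eps A B C : 0 <= C -> (forall e, 0 < e -> A <= B + e * (C + 1)) -> A <= B.
Proof.
  intros HC H. apply Rnot_lt_le; intro Hlt.
  set (e := (A - B) / (C + 1) / 2).
  assert (He : 0 < e) by (unfold e; apply Rmult_lt_0_compat; [apply Rdiv_lt_0_compat|]; lra).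
  specialize (H e He).
  assert (e * (C + 1) = (A - B) / 2) by (unfold e; field; lra). lra.
Qed.

Lemma fchoice {A} (d : A) (P : nat -> A -> Prop) n :
  (forall i, (i < n)%nat -> exists y, P i y) -> exists F : nat -> A, forall i, (i < n)%nat -> P i (F i).
Proof.
  induction n; intros H.
  - exists (fun _ => d); intros; lia.
  - destruct IHn as [F HF]; [intros; apply H; lia|].
    destruct (H n ltac:(lia)) as [y Hy].
    exists (fun i => if (i =? n)%nat then y else F i).
    intros i Hi. destruct (Nat.eqb_spec i n) as [->|Hne]; auto. apply HF; lia.
Qed.

Lemma nat_bound (h : nat -> nat) p : exists K0, forall i, (i < p)%nat -> (h i < K0)%nat.
Proof.
  induction p. exists 0%nat; intros; lia.
  destruct IHp as [K0 H]. exists (Nat.max K0 (S (h p))). intros i Hi.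
  destruct (Nat.eq_dec i p) as [->|]; [lia|]. specialize (H i ltac:(lia)); lia.
Qed.

Lemma deriv_local al be f x g K eps : has_deriv_within al be f x g -> Rabs g <= K -> 0 < eps ->
  exists d, 0 < d /\ forall u v, al <= u -> u <= x -> x <= v -> v <= be -> v - u < d ->
    Rabs (f v - f u) <= (K + eps) * (v - u).
Proof.
  intros Hd Hg He. destruct (Hd eps He) as [d [Hdp Hdd]]. exists d; split; auto.
  assert (Hy : forall y, al <= y <= be -> Rabs (y - x) < d -> Rabs (f y - f x) <= (K + eps) * Rabs (y - x)).
  { intros y Hy Hyx. destruct (Req_dec y x) as [->|Hne].
    - replace (f x - f x) with 0 by ring. rewrite Rabs_R0, Rminus_diag, Rabs_R0. lra.
    - specialize (Hdd y Hy Hne Hyx).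
      set (D := (f y - f x) / (y - x)) in *.
      assert (E : f y - f x = D * (y - x)) by (unfold D; field; lra).
      rewrite E, Rabs_mult. apply Rmult_le_compat_r; [apply Rabs_pos|].
      assert (Rabs D <= Rabs (D - g) + Rabs g) by (replace D with ((D - g) + g) at 1 by ring; apply Rabs_triang).
      lra. }
  intros u v Hu Hux Hxv Hv Hvu.
  assert (H1 : Rabs (f v - f x) <= (K + eps) * Rabs (v - x)) by (apply Hy; [lra|]; rewrite Rabs_right; lra).
  assert (H2 : Rabs (f u - f x) <= (K + eps) * Rabs (u - x)) by (apply Hy; [lra|]; rewrite Rabs_left1; lra).
  rewrite (Rabs_right (v - x)) in H1 by lra. rewrite (Rabs_left1 (u - x)) in H2 by lra.
  replace (f v - f u) with ((f v - f x) - (f u - f x)) by ring.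
  eapply Rle_trans; [apply Rabs_triang|]. rewrite Rabs_Ropp. lra.
Qed.

Lemma part_bound (f : R -> R) K' p (u : nat -> R) (b : nat -> bool) : 0 <= K' ->
  (forall i, (i < p)%nat -> u i <= u (S i)) ->
  (forall i, (i < p)%nat -> b i = true -> Rabs (f (u (S i)) - f (u i)) <= K' * (u (S i) - u i)) ->
  Rabs (f (u p) - f (u 0%nat)) <= K' * (u p - u 0%nat) + sumR (fun i => if b i then 0 else Rabs (f (u (S i)) - f (u i))) p.
Proof.
  intros HK Hm Hb. induction p.
  - simpl. replace (f (u 0%nat) - f (u 0%nat)) with 0 by ring. rewrite Rabs_R0. lra.
  - simpl. assert (IH : Rabs (f (u p) - f (u 0%nat)) <= K' * (u p - u 0%nat) + sumR (fun i => if b i then 0 else Rabs (f (u (S i)) - f (u i))) p)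
      by (apply IHp; intros; [apply Hm|apply Hb]; auto; lia).
    replace (f (u (S p)) - f (u 0%nat)) with ((f (u p) - f (u 0%nat)) + (f (u (S p)) - f (u p))) by ring.
    eapply Rle_trans; [apply Rabs_triang|].
    assert (Hmp := Hm p ltac:(lia)).
    destruct (b p) eqn:Eb.
    + assert (H := Hb p ltac:(lia) Eb). nra.
    + nra.
Qed.

Lemma part_range (u : nat -> R) p : (forall i, (i < p)%nat -> u i <= u (S i)) ->
  forall i, (i <= p)%nat -> u 0%nat <= u i <= u p.
Proof.
  intros Hm i Hi. split.
  - induction i; [lra|]. assert (u i <= u (S i)) by (apply Hm; lia). assert (u 0%nat <= u i) by (apply IHi; lia). lra.
  - remember (p - i)%nat as j. revert i Hi Heqj. induction j; intros i Hi Hj.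
    + replace i with p by lia; lra.
    + assert (u i <= u (S i)) by (apply Hm; lia). assert (u (S i) <= u p) by (apply IHj; lia). lra.
Qed.

Lemma cover_k (u : nat -> R) (sel : nat -> bool) lk rk p :
  (forall i, (i < p)%nat -> u i <= u (S i)) ->
  (forall i, (i < p)%nat -> sel i = true -> lk <= u i /\ u (S i) <= rk) ->
  forall q, (q <= p)%nat -> forall t, u q <= t ->
  sumR (fun i => if sel i then u (S i) - u i else 0) q <= Rmax 0 (Rmin t rk - lk).
Proof.
  intros Hm Hs q. induction q; intros Hq t Ht.
  - simpl. apply Rmax_l.
  - simpl. assert (Hmq := Hm q ltac:(lia)). destruct (sel q) eqn:E.
    + destruct (Hs q ltac:(lia) E) as [H1 H2].
      assert (IH := IHq ltac:(lia) (u q) ltac:(lra)).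
      assert (Rmax 0 (Rmin (u q) rk - lk) = u q - lk).
      { rewrite Rmin_left by lra. rewrite Rmax_right; lra. }
      assert (u (S q) - lk <= Rmax 0 (Rmin t rk - lk)).
      { eapply Rle_trans; [|apply Rmax_r]. apply Rmin_case_strong; intros; lra. }
      lra.
    + assert (IH := IHq ltac:(lia) t ltac:(lra)). lra.
Qed.

Lemma cover_all (u : nat -> R) (b : nat -> bool) (kf : nat -> nat) (l r : nat -> R) p :
  (forall i, (i < p)%nat -> u i <= u (S i)) ->
  (forall k, l k <= r k) ->
  (forall i, (i < p)%nat -> b i = false -> l (kf i) <= u i /\ u (S i) <= r (kf i)) ->
  forall K0, sumR (fun i => if b i then 0 else if (kf i <? K0)%nat then u (S i) - u i else 0) p
    <= sumR (fun k => r k - l k) K0.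
Proof.
  intros Hm Hlr Hc K0. induction K0.
  - simpl. rewrite sumR_zero; [lra|]. intros k _. destruct (b k); auto.
  - simpl.
    rewrite (sumR_ext _ (fun i => (if b i then 0 else if (kf i <? K0)%nat then u (S i) - u i else 0)
       + (if (andb (negb (b i)) (Nat.eqb (kf i) K0)) then u (S i) - u i else 0))).
    2:{ intros i Hi. destruct (b i); simpl; [ring|].
        destruct (Nat.ltb_spec (kf i) (S K0)), (Nat.ltb_spec (kf i) K0), (Nat.eqb_spec (kf i) K0); try lia; ring. }
    rewrite sumR_plus.
    assert (H2 := cover_k u (fun i => andb (negb (b i)) (Nat.eqb (kf i) K0)) (l K0) (r K0) p Hm).
    assert (H3 : sumR (fun i => if (andb (negb (b i)) (Nat.eqb (kf i) K0)) then u (S i) - u i else 0) p <= Rmax 0 (Rmin (u p) (r K0) - l K0)).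
    { refine (H2 _ p (le_n p) (u p) (Rle_refl _)). intros i Hi Hs. cbv beta in Hs. apply andb_prop in Hs as [Hb Hk].
      apply Nat.eqb_eq in Hk. destruct (b i) eqn:Eb; [discriminate|]. subst K0. apply Hc; auto. }
    assert (Rmax 0 (Rmin (u p) (r K0) - l K0) <= r K0 - l K0).
    { specialize (Hlr K0). apply Rmax_case_strong; intros; [lra|]. apply Rmin_case_strong; intros; lra. }
    lra.
Qed.

Lemma Lip0 (f df : R -> R) (al be K : R) : al <= be ->
  (forall x, al <= x <= be -> Rabs (df x) <= K /\ has_deriv_within al be f x (df x)) ->
  Rabs (f be - f al) <= K * (be - al).
Proof.
  intros Hab Hd.
  apply (le_eps _ _ (be - al)); [lra|]. intros e He.
  assert (HK : 0 <= K) by (destruct (Hd al ltac:(lra)) as [H _]; pose proof (Rabs_pos (df al)); lra).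
  destruct (cousin al be (fun x u v => Rabs (f v - f u) <= (K + e) * (v - u)) Hab) as [p [u [c [H0 [Hp Hi]]]]].
  { intros x Hx. destruct (Hd x Hx) as [H1 H2].
    destruct (deriv_local al be f x (df x) K e H2 H1 He) as [d [Hd0 Hdd]].
    exists d; split; auto. }
  assert (Hm : forall i, (i < p)%nat -> u i <= u (S i)) by (intros i Hi'; destruct (Hi i Hi') as [[? ?] _]; lra).
  pose proof (part_bound f (K + e) p u (fun _ => true) ltac:(lra) Hm) as PB.
  rewrite sumR_zero in PB by auto. rewrite Hp, H0 in PB.
  assert (Rabs (f be - f al) <= (K + e) * (be - al)) by (apply (Rle_trans _ _ _ (PB ltac:(intros i Hi' _; apply Hi; auto))); lra).
  nra.
Qed.

Lemma LipN (f : R -> R) (N : R -> Prop) (al be K : R) : al <= be -> 0 <= K ->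
  abs_cont_on al be f -> null_set N ->
  (forall x, al <= x <= be -> ~ N x -> exists g, Rabs g <= K /\ has_deriv_within al be f x g) ->
  Rabs (f be - f al) <= K * (be - al).
Proof.
  intros Hab HK Hac HN Hd.
  apply (le_eps _ _ (be - al)); [lra|]. intros e He.
  destruct (Hac e He) as [dl [Hdl Hacd]].
  destruct (HN (dl / 2) ltac:(lra)) as [l [r [Hlr [Hcov Hsum]]]].
  destruct (cousin al be (fun x u v => Rabs (f v - f u) <= (K + e) * (v - u) \/ exists k, l k <= u /\ v <= r k) Hab)
    as [p [u [c [H0 [Hp Hi]]]]].
  { intros x Hx. destruct (classic (N x)) as [Nx|Nx].
    - destruct (Hcov x Nx) as [k Hk]. exists (Rmin (x - l k) (r k - x)).
      split; [apply Rmin_case_strong; intros; lra|].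
      intros u v Hu Hux Hxv Hv Hvu. right. exists k.
      revert Hvu; apply Rmin_case_strong; intros; lra.
    - destruct (Hd x Hx Nx) as [g [Hg Hgd]].
      destruct (deriv_local al be f x g K e Hgd Hg He) as [d [Hd0 Hdd]].
      exists d; split; auto. }
  assert (Hm : forall i, (i < p)%nat -> u i <= u (S i)) by (intros i Hi'; destruct (Hi i Hi') as [[? ?] _]; lra).
  destruct (fchoice (true, 0%nat) (fun i y => if fst y then Rabs (f (u (S i)) - f (u i)) <= (K + e) * (u (S i) - u i)
      else l (snd y) <= u i /\ u (S i) <= r (snd y)) p) as [F HF].
  { intros i Hi'. destruct (Hi i Hi') as [_ [H|[k Hk]]].
    - exists (true, 0%nat); auto.
    - exists (false, k); auto. }
  set (b := fun i => fst (F i)). set (kf := fun i => snd (F i)).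
  pose proof (part_bound f (K + e) p u b ltac:(lra) Hm) as PB.
  assert (PB' : Rabs (f (u p) - f (u 0%nat)) <= (K + e) * (u p - u 0%nat) +
      sumR (fun i => if b i then 0 else Rabs (f (u (S i)) - f (u i))) p).
  { apply PB. intros i Hi' Hb. specialize (HF i Hi'). unfold b in Hb. rewrite Hb in HF. auto. }
  rewrite Hp, H0 in PB'.
  destruct (nat_bound kf p) as [K0 HK0].
  assert (HL : sumR (fun i => if b i then 0 else u (S i) - u i) p < dl).
  { assert (C := cover_all u b kf l r p Hm Hlr).
    assert (C' : sumR (fun i => if b i then 0 else if (kf i <? K0)%nat then u (S i) - u i else 0) p <= sumR (fun k => r k - l k) K0).
    { apply C. intros i Hi' Hb. specialize (HF i Hi'). unfold b in Hb. rewrite Hb in HF. auto. }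
    rewrite (sumR_ext _ (fun i => if b i then 0 else u (S i) - u i)) in C'.
    2:{ intros i Hi'. destruct (b i); auto. rewrite (proj2 (Nat.ltb_lt _ _) (HK0 i Hi')); auto. }
    specialize (Hsum K0). lra. }
  assert (HR := part_range u p Hm). rewrite H0, Hp in HR.
  assert (HV : sumR (fun i => Rabs (f (if b i then u i else u (S i)) - f (u i))) p < e).
  { apply (Hacd p u (fun i => if b i then u i else u (S i))).
    - intros k Hk. assert (Hk1 := HR k ltac:(lia)). assert (Hk2 := HR (S k) ltac:(lia)). assert (Hmk := Hm k Hk).
      destruct (b k); lra.
    - intros k Hk. assert (Hmk := Hm k ltac:(lia)). destruct (b k); lra.
    - rewrite (sumR_ext _ (fun i => if b i then 0 else u (S i) - u i)); auto.
      intros i _. destruct (b i); ring. }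
  rewrite (sumR_ext _ (fun i => if b i then 0 else Rabs (f (u (S i)) - f (u i)))) in HV.
  2:{ intros i _. destruct (b i); auto. replace (f (u i) - f (u i)) with 0 by ring. apply Rabs_R0. }
  nra.
Qed.

Lemma deriv_restrict lo hi lo' hi' f x l : has_deriv_within lo hi f x l -> lo <= lo' -> hi' <= hi ->
  has_deriv_within lo' hi' f x l.
Proof.
  intros H H1 H2 e He. destruct (H e He) as [d [Hd Hdd]]. exists d; split; auto.
  intros y Hy. apply Hdd; lra.
Qed.

Lemma ac_restrict lo hi lo' hi' f : abs_cont_on lo hi f -> lo <= lo' -> hi' <= hi -> abs_cont_on lo' hi' f.
Proof.
  intros H H1 H2 e He. destruct (H e He) as [d [Hd Hdd]]. exists d; split; auto.
  intros N l r Hlr. apply Hdd. intros k Hk. specialize (Hlr k Hk). lra.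
Qed.

Lemma clamp_prop a x c : 0 <= c <= a -> 0 <= Rmax 0 (Rmin a x) <= a /\ Rabs (Rmax 0 (Rmin a x) - c) <= Rabs (x - c).
Proof.
  intros Hc. split.
  - split; [apply Rmax_l|]. apply Rmax_case_strong; intros; [lra|]. apply Rmin_l.
  - unfold Rmax, Rmin; repeat destruct Rle_dec; unfold Rabs; repeat destruct Rcase_abs; lra.
Qed.

Lemma bounded_z (z dz : R -> R) a : 0 <= a -> (forall x, 0 <= x <= a -> has_deriv_within 0 a z x (dz x)) ->
  exists B, forall x, 0 <= x <= a -> Rabs (z x) <= B.
Proof.
  intros Ha Hd.
  set (zc := fun x => z (Rmax 0 (Rmin a x))).
  assert (Hcont : forall c, 0 <= c <= a -> continuity_pt (fun x => Rabs (zc x)) c).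
  { intros c Hc. apply (continuity_pt_comp zc Rabs); [|apply Rcontinuity_abs].
    unfold continuity_pt, continue_in, limit1_in, limit_in. intros eps Heps.
    destruct (deriv_local 0 a z c (dz c) (Rabs (dz c)) 1 (Hd c Hc) (Rle_refl _) Rlt_0_1) as [d [Hd0 Hdd]].
    exists (Rmin d (eps / (Rabs (dz c) + 2))). split.
    { apply Rmin_case_strong; intros; auto. apply Rdiv_lt_0_compat; [lra|]. pose proof (Rabs_pos (dz c)); lra. }
    intros x [_ Hx]. simpl in *. unfold R_dist in *.
    destruct (clamp_prop a x c Hc) as [Hcl1 Hcl2].
    set (y := Rmax 0 (Rmin a x)) in *.
    assert (Ezc : zc c = z c) by (unfold zc; rewrite Rmin_right, Rmax_right; lra).
    rewrite Ezc. unfold zc; fold y.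
    assert (Hyd : Rabs (y - c) < d) by (revert Hx; apply Rmin_case_strong; intros; lra).
    assert (Hye : Rabs (y - c) < eps / (Rabs (dz c) + 2)) by (revert Hx; apply Rmin_case_strong; intros; lra).
    assert (Hb : Rabs (z y - z c) <= (Rabs (dz c) + 1) * Rabs (y - c)).
    { destruct (Rle_dec y c).
      - rewrite (Rabs_left1 (y - c)) by lra. rewrite <- Rabs_Ropp. replace (- (z y - z c)) with (z c - z y) by ring.
        replace (- (y - c)) with (c - y) by ring. apply Hdd; try lra. rewrite Rabs_left1 in Hyd by lra. lra.
      - rewrite (Rabs_right (y - c)) by lra. apply Hdd; try lra. rewrite Rabs_right in Hyd by lra. lra. }
    pose proof (Rabs_pos (dz c)). pose proof (Rabs_pos (y - c)).
    assert ((Rabs (dz c) + 2) * Rabs (y - c) < eps).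
    { apply (Rmult_lt_compat_l (Rabs (dz c) + 2)) in Hye; [|lra].
      replace ((Rabs (dz c) + 2) * (eps / (Rabs (dz c) + 2))) with eps in Hye by (field; lra). lra. }
    nra. }
  destruct (continuity_ab_maj _ 0 a Ha Hcont) as [Mx [HM _]].
  exists (Rabs (zc Mx)). intros x Hx. specialize (HM x Hx).
  unfold zc in HM at 1. rewrite Rmin_right, Rmax_right in HM by lra. exact HM.
Qed.

Lemma uniq (q z dz : R -> R) (a M e : R) : 0 < a ->
  null_set (fun x => 0 <= x <= a /\ M < Rabs (q x)) -> edge_sol q a z dz ->
  0 <= e <= a -> z e = 0 -> dz e = 0 -> forall x, 0 <= x <= a -> z x = 0 /\ dz x = 0.
Proof.
  intros Ha HM [Hzd [Hac Hnd]] He Hze Hdze.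
  set (M0 := Rmax M 0).
  assert (HM0 : 0 <= M0) by apply Rmax_r.
  set (Nq := fun x => 0 <= x <= a /\ M0 < Rabs (q x)).
  assert (HNq : null_set Nq) by (apply (null_subset _ _ HM); intros x [H1 H2]; split; auto; unfold M0 in H2; pose proof (Rmax_l M 0); lra).
  set (N := fun x => Nq x \/ (0 <= x <= a /\ ~ has_deriv_within 0 a dz x (q x * z x))).
  assert (HN : null_set N) by (apply null_union; auto).
  destruct (bounded_z z dz a ltac:(lra) Hzd) as [B HB].
  assert (HB0 : 0 <= B) by (specialize (HB e He); pose proof (Rabs_pos (z e)); lra).
  set (h := / (M0 + 1)).
  assert (Hh : 0 < h) by (unfold h; apply Rinv_0_lt_compat; lra).
  assert (Hh1 : h * (M0 + 1) = 1) by (unfold h; field; lra).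
  assert (Hhh : M0 * h * h <= 1/2) by nra.
  assert (Hstep : forall e', 0 <= e' <= a -> z e' = 0 -> dz e' = 0 -> forall B', 0 <= B' ->
    (forall y, 0 <= y <= a -> Rabs (y - e') <= h -> Rabs (z y) <= B') ->
    forall y, 0 <= y <= a -> Rabs (y - e') <= h -> Rabs (dz y) <= M0 * B' * h /\ Rabs (z y) <= M0 * B' * h * h).
  { intros e' He' Hz' Hd' B' HB' Hzb.
    assert (Hp1 : forall y, 0 <= y <= a -> Rabs (y - e') <= h -> Rabs (dz y) <= M0 * B' * h).
    { intros y Hy Hye.
      set (al := Rmin y e'). set (be := Rmax y e').
      assert (Hal : 0 <= al) by (unfold al; apply Rmin_case_strong; lra).
      assert (Hbe : be <= a) by (unfold be; apply Rmax_case_strong; lra).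
      assert (Halbe : al <= be) by (unfold al, be; apply Rmin_case_strong; apply Rmax_case_strong; lra).
      assert (Hin : forall x, al <= x <= be -> 0 <= x <= a /\ Rabs (x - e') <= h).
      { intros x Hx. split; [lra|]. revert Hx Hye. unfold al, be. apply Rmin_case_strong; apply Rmax_case_strong;
          intros; unfold Rabs in *; repeat destruct Rcase_abs; lra. }
      assert (L := LipN dz N al be (M0 * B') Halbe ltac:(nra) (ac_restrict _ _ _ _ _ Hac Hal Hbe) HN).
      assert (L' : Rabs (dz be - dz al) <= M0 * B' * (be - al)).
      { apply L. intros x Hx HNx. destruct (Hin x Hx) as [Hx0 Hxe].
        exists (q x * z x). split.
        - rewrite Rabs_mult. assert (Rabs (q x) <= M0) by (apply Rnot_lt_le; intro; apply HNx; left; split; auto).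
          assert (Rabs (z x) <= B') by (apply Hzb; auto). pose proof (Rabs_pos (q x)). pose proof (Rabs_pos (z x)). nra.
        - apply (deriv_restrict 0 a); try lra. apply NNPP; intro Hn; apply HNx; right; split; auto. }
      assert (0 <= M0 * B') by (apply Rmult_le_pos; lra).
      unfold al, be in L'. destruct (Rle_dec y e') as [Hle|Hgt].
      - rewrite Rmin_left, Rmax_right in L' by lra. rewrite Hd' in L'.
        replace (0 - dz y) with (- dz y) in L' by ring. rewrite Rabs_Ropp in L'. rewrite Rabs_left1 in Hye by lra. nra.
      - rewrite Rmin_right, Rmax_left in L' by lra. rewrite Hd' in L'.
        replace (dz y - 0) with (dz y) in L' by ring. rewrite Rabs_right in Hye by lra. nra. }
    intros y Hy Hye. split; [apply Hp1; auto|].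
    set (al := Rmin y e'). set (be := Rmax y e').
    assert (Hal : 0 <= al) by (unfold al; apply Rmin_case_strong; lra).
    assert (Hbe : be <= a) by (unfold be; apply Rmax_case_strong; lra).
    assert (Halbe : al <= be) by (unfold al, be; apply Rmin_case_strong; apply Rmax_case_strong; lra).
    assert (Hin : forall x, al <= x <= be -> 0 <= x <= a /\ Rabs (x - e') <= h).
    { intros x Hx. split; [lra|]. revert Hx Hye. unfold al, be. apply Rmin_case_strong; apply Rmax_case_strong;
        intros; unfold Rabs in *; repeat destruct Rcase_abs; lra. }
    assert (L' : Rabs (z be - z al) <= M0 * B' * h * (be - al)).
    { apply (Lip0 z dz); auto. intros x Hx. destruct (Hin x Hx) as [Hx0 Hxe]. split.
      - apply Hp1; auto.
      - apply (deriv_restrict 0 a); try lra. apply Hzd; auto. }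
    assert (HMB : 0 <= M0 * B' * h) by (apply Rmult_le_pos; [apply Rmult_le_pos|]; lra).
    unfold al, be in L'. destruct (Rle_dec y e') as [Hle|Hgt].
    - rewrite Rmin_left, Rmax_right in L' by lra. rewrite Hz' in L'.
      replace (0 - z y) with (- z y) in L' by ring. rewrite Rabs_Ropp in L'. rewrite Rabs_left1 in Hye by lra. nra.
    - rewrite Rmin_right, Rmax_left in L' by lra. rewrite Hz' in L'.
      replace (z y - 0) with (z y) in L' by ring. rewrite Rabs_right in Hye by lra. nra. }
  assert (Hloc : forall e', 0 <= e' <= a -> z e' = 0 -> dz e' = 0 ->
    forall y, 0 <= y <= a -> Rabs (y - e') <= h -> z y = 0 /\ dz y = 0).
  { intros e' He' Hz' Hd'.
    assert (Hj : forall j, forall y, 0 <= y <= a -> Rabs (y - e') <= h -> Rabs (z y) <= B * (1/2) ^ j).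
    { induction j; intros y Hy Hye.
      - simpl. rewrite Rmult_1_r. auto.
      - assert (Hpj : 0 <= (1/2) ^ j) by (apply pow_le; lra).
        destruct (Hstep e' He' Hz' Hd' (B * (1/2)^j) ltac:(nra) IHj y Hy Hye) as [_ H2].
        simpl. assert (0 <= B * (1/2)^j) by nra. nra. }
    assert (Hz0 : forall y, 0 <= y <= a -> Rabs (y - e') <= h -> z y = 0).
    { intros y Hy Hye. apply NNPP; intro Hne.
      assert (Hpos : 0 < Rabs (z y) / (B + 1)) by (apply Rdiv_lt_0_compat; [apply Rabs_pos_lt; auto|lra]).
      destruct (pow_lt_1_zero (1/2) ltac:(rewrite Rabs_right; lra) _ Hpos) as [Nn HNn].
      specialize (HNn Nn (le_n _)). specialize (Hj Nn y Hy Hye).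
      rewrite Rabs_right in HNn by (apply Rle_ge, pow_le; lra).
      apply (Rmult_lt_compat_l (B + 1)) in HNn; [|lra].
      replace ((B + 1) * (Rabs (z y) / (B + 1))) with (Rabs (z y)) in HNn by (field; lra).
      assert (0 <= (1/2) ^ Nn) by (apply pow_le; lra). nra. }
    intros y Hy Hye. split; [apply Hz0; auto|].
    destruct (Hstep e' He' Hz' Hd' 0 (Rle_refl _) ltac:(intros; rewrite Hz0; auto; rewrite Rabs_R0; lra) y Hy Hye) as [H1 _].
    assert (Rabs (dz y) <= 0) by nra. pose proof (Rabs_pos (dz y)).
    destruct (Req_dec (dz y) 0); auto. pose proof (Rabs_pos_lt _ H2); lra. }
  assert (Hglob : forall j, forall x, 0 <= x <= a -> Rabs (x - e) <= INR j * h -> z x = 0 /\ dz x = 0).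
  { induction j; intros x Hx Hxe.
    - simpl in Hxe. rewrite Rmult_0_l in Hxe. assert (x = e) by (pose proof (Rabs_pos (x - e)); destruct (Req_dec x e); auto; assert (x - e <> 0) by lra; pose proof (Rabs_pos_lt _ H1); lra).
      subst; auto.
    - rewrite S_INR in Hxe.
      set (x' := if Rle_dec e x then Rmax e (x - h) else Rmin e (x + h)).
      assert (Hx' : 0 <= x' <= a /\ Rabs (x' - e) <= INR j * h /\ Rabs (x - x') <= h).
      { pose proof (pos_INR j). assert (0 <= INR j * h) by (apply Rmult_le_pos; lra). unfold x'. destruct (Rle_dec e x).
        - rewrite Rabs_right in Hxe by lra. apply Rmax_case_strong; intros;
            repeat split; try lra; unfold Rabs; repeat destruct Rcase_abs; lra.
        - rewrite Rabs_left in Hxe by lra. apply Rmin_case_strong; intros;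
            repeat split; try lra; unfold Rabs; repeat destruct Rcase_abs; lra. }
      destruct Hx' as [Hx'1 [Hx'2 Hx'3]].
      destruct (IHj x' Hx'1 Hx'2) as [Hz' Hd'].
      apply (Hloc x' Hx'1 Hz' Hd' x Hx). auto. }
  destruct (INR_archimed h a Hh) as [j Hj].
  intros x Hx. apply (Hglob j x Hx). unfold Rabs; destruct Rcase_abs; lra.
Qed.

Lemma deriv_lin lo hi f g x lf lg c1 c2 : has_deriv_within lo hi f x lf -> has_deriv_within lo hi g x lg ->
  has_deriv_within lo hi (fun y => c1 * f y + c2 * g y) x (c1 * lf + c2 * lg).
Proof.
  intros Hf Hg eps He.
  set (e' := eps / (Rabs c1 + Rabs c2 + 1)).
  pose proof (Rabs_pos c1). pose proof (Rabs_pos c2).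
  assert (He' : 0 < e') by (unfold e'; apply Rdiv_lt_0_compat; lra).
  assert (Hee : (Rabs c1 + Rabs c2 + 1) * e' = eps) by (unfold e'; field; lra).
  destruct (Hf e' He') as [d1 [Hd1 H1]]. destruct (Hg e' He') as [d2 [Hd2 H2]].
  exists (Rmin d1 d2). split; [apply Rmin_case; lra|].
  intros y Hy Hne Hyx.
  assert (Hy1 : Rabs (y - x) < d1) by (revert Hyx; apply Rmin_case_strong; intros; lra).
  assert (Hy2 : Rabs (y - x) < d2) by (revert Hyx; apply Rmin_case_strong; intros; lra).
  specialize (H1 y Hy Hne Hy1). specialize (H2 y Hy Hne Hy2).
  replace ((c1 * f y + c2 * g y - (c1 * f x + c2 * g x)) / (y - x) - (c1 * lf + c2 * lg))
    with (c1 * ((f y - f x) / (y - x) - lf) + c2 * ((g y - g x) / (y - x) - lg)) by (field; lra).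
  eapply Rle_lt_trans; [apply Rabs_triang|]. rewrite !Rabs_mult.
  pose proof (Rabs_pos ((f y - f x) / (y - x) - lf)). pose proof (Rabs_pos ((g y - g x) / (y - x) - lg)).
  nra.
Qed.

Lemma ac_lin lo hi f g c1 c2 : abs_cont_on lo hi f -> abs_cont_on lo hi g ->
  abs_cont_on lo hi (fun y => c1 * f y + c2 * g y).
Proof.
  intros Hf Hg eps He.
  set (e' := eps / (Rabs c1 + Rabs c2 + 1)).
  pose proof (Rabs_pos c1). pose proof (Rabs_pos c2).
  assert (He' : 0 < e') by (unfold e'; apply Rdiv_lt_0_compat; lra).
  assert (Hee : (Rabs c1 + Rabs c2 + 1) * e' = eps) by (unfold e'; field; lra).
  destruct (Hf e' He') as [d1 [Hd1 H1]]. destruct (Hg e' He') as [d2 [Hd2 H2]].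
  exists (Rmin d1 d2). split; [apply Rmin_case; lra|].
  intros N l r Hlr Hord Hs.
  assert (S1 : sumR (fun k => r k - l k) N < d1) by (revert Hs; apply Rmin_case_strong; intros; lra).
  assert (S2 : sumR (fun k => r k - l k) N < d2) by (revert Hs; apply Rmin_case_strong; intros; lra).
  specialize (H1 N l r Hlr Hord S1). specialize (H2 N l r Hlr Hord S2).
  eapply Rle_lt_trans.
  - apply (sumR_le _ (fun k => Rabs c1 * Rabs (f (r k) - f (l k)) + Rabs c2 * Rabs (g (r k) - g (l k)))).
    intros k _. rewrite <- !Rabs_mult.
    replace (c1 * f (r k) + c2 * g (r k) - (c1 * f (l k) + c2 * g (l k))) with
      (c1 * (f (r k) - f (l k)) + c2 * (g (r k) - g (l k))) by ring. apply Rabs_triang.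
  - rewrite sumR_plus, !sumR_scal. nra.
Qed.

Lemma edge_sol_lin q a z1 dz1 z2 dz2 c1 c2 : edge_sol q a z1 dz1 -> edge_sol q a z2 dz2 ->
  edge_sol q a (fun x => c1 * z1 x + c2 * z2 x) (fun x => c1 * dz1 x + c2 * dz2 x).
Proof.
  intros [A1 [B1 C1]] [A2 [B2 C2]]. split; [|split].
  - intros x Hx. apply deriv_lin; auto.
  - apply ac_lin; auto.
  - apply (null_subset _ _ (null_union _ _ C1 C2)). intros x [Hx Hn].
    apply NNPP; intro Hn2. apply Hn.
    replace (q x * (c1 * z1 x + c2 * z2 x)) with (c1 * (q x * z1 x) + c2 * (q x * z2 x)) by ring.
    apply deriv_lin; apply NNPP; intro Hn3; apply Hn2; [left|right]; split; auto.
Qed.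

Lemma edge_sol_zero q a : edge_sol q a (fun _ => 0) (fun _ => 0).
Proof.
  assert (D : forall x c, has_deriv_within 0 a (fun _ => 0) x c -> True) by auto.
  assert (Hd : forall x l, l = 0 -> has_deriv_within 0 a (fun _ => 0) x l).
  { intros x l -> eps He. exists 1; split; [lra|]. intros. replace ((0 - 0) / (y - x) - 0) with 0 by (field; lra).
    rewrite Rabs_R0; lra. }
  split; [|split].
  - intros; apply Hd; auto.
  - intros eps He. exists 1; split; [lra|]. intros. rewrite sumR_zero; auto.
    intros; replace (0 - 0) with 0 by ring; apply Rabs_R0.
  - intros eps He. exists (fun _ => 0), (fun _ => 0). split; [intros; lra|]. split.
    + intros x [_ Hn]. exfalso. apply Hn, Hd. ring.
    + intros K. rewrite sumR_zero; [lra|]. intros; ring.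
Qed.

Lemma edge_sol_ext q a z dz z' dz' : edge_sol q a z dz -> (forall x, z x = z' x) -> (forall x, dz x = dz' x) ->
  edge_sol q a z' dz'.
Proof.
  intros H E1 E2. replace z' with z by (extensionality x; auto). replace dz' with dz by (extensionality x; auto). auto.
Qed.

Lemma edge_sol_sum q a (Z DZ : nat -> R -> R) (c : nat -> R) m :
  (forall k, (k < m)%nat -> edge_sol q a (Z k) (DZ k)) ->
  edge_sol q a (fun x => sumR (fun k => c k * Z k x) m) (fun x => sumR (fun k => c k * DZ k x) m).
Proof.
  induction m; intros H.
  - apply edge_sol_zero.
  - assert (IH := IHm ltac:(intros; apply H; lia)).
    assert (L := edge_sol_lin _ _ _ _ _ _ 1 (c m) IH (H m ltac:(lia))).
    apply (edge_sol_ext _ _ _ _ _ _ L); intros; simpl; ring.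
Qed.

Lemma dep m : forall d, (d < m)%nat -> forall v : nat -> nat -> R,
  exists c : nat -> R, (exists k, (k < m)%nat /\ c k <> 0) /\
    forall j, (j < d)%nat -> sumR (fun k => c k * v k j) m = 0.
Proof.
  induction m as [|m IH]; intros d Hd v; [lia|].
  destruct (classic (forall j, (j < d)%nat -> v m j = 0)) as [Hz|Hnz].
  - exists (fun k => if (k =? m)%nat then 1 else 0). split.
    + exists m. rewrite Nat.eqb_refl. split; [lia|lra].
    + intros j Hj. rewrite (sumR_single _ _ m); [|lia|].
      * rewrite Nat.eqb_refl, Hz; auto; ring.
      * intros k Hk Hne. rewrite (proj2 (Nat.eqb_neq k m) Hne). ring.
  - destruct (not_all_ex_not _ _ Hnz) as [j0 Hj0].
    apply imply_to_and in Hj0. destruct Hj0 as [Hj0d Hp].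
    destruct d as [|d']; [lia|].
    set (p := v m j0).
    set (sk := fun j => if (j <? j0)%nat then j else S j).
    destruct (IH d' ltac:(lia) (fun k j => v k (sk j) - (v k j0 / p) * v m (sk j))) as [c' [[k0 [Hk0 Hc0]] Hc']].
    set (T := fun j => sumR (fun k => c' k * v k j) m).
    exists (fun k => if (k <? m)%nat then c' k else - T j0 / p). split.
    + exists k0. split; [lia|]. rewrite (proj2 (Nat.ltb_lt k0 m) Hk0). auto.
    + intros j Hj. simpl. rewrite Nat.ltb_irrefl.
      rewrite (sumR_ext _ (fun k => c' k * v k j)).
      2:{ intros k Hk. rewrite (proj2 (Nat.ltb_lt k m) Hk). auto. }
      fold (T j).
      destruct (Nat.eq_dec j j0) as [->|Hne].
      * fold p. field. auto.
      * set (j' := if (j <? j0)%nat then j else pred j).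
        assert (Hj' : (j' < d')%nat) by (unfold j'; destruct (Nat.ltb_spec j j0); lia).
        assert (Hsk : sk j' = j) by (unfold sk, j'; destruct (Nat.ltb_spec j j0); [rewrite (proj2 (Nat.ltb_lt j j0)); lia|];
          destruct (Nat.ltb_spec (pred j) j0); lia).
        specialize (Hc' j' Hj'). cbv beta in Hc'. rewrite Hsk in Hc'.
        rewrite (sumR_ext _ (fun k => c' k * v k j + (- v m j / p) * (c' k * v k j0))) in Hc'
          by (intros; field; auto).
        rewrite sumR_plus, sumR_scal in Hc'. fold (T j) in Hc'. fold (T j0) in Hc'. fold p.
        replace (- T j0 / p * v m j) with (- v m j / p * T j0) by (field; auto). lra.
Qed.

Lemma enum (P : nat -> Prop) n : exists d (g : nat -> nat),
  (forall j, (j < d)%nat -> (g j < n)%nat /\ P (g j)) /\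
  (forall j l, (j < d)%nat -> (l < d)%nat -> g j = g l -> j = l) /\
  (forall i, (i < n)%nat -> P i -> exists j, (j < d)%nat /\ g j = i).
Proof.
  induction n.
  - exists 0%nat, (fun _ => 0%nat). split; [|split]; intros; lia.
  - destruct IHn as [d [g [H1 [H2 H3]]]].
    destruct (classic (P n)) as [Pn|Pn].
    + exists (S d), (fun j => if (j =? d)%nat then n else g j). split; [|split].
      * intros j Hj. destruct (Nat.eqb_spec j d); [split; [lia|auto]|]. specialize (H1 j ltac:(lia)). split; [lia|tauto].
      * intros j l Hj Hl. destruct (Nat.eqb_spec j d), (Nat.eqb_spec l d); intros E; try lia.
        -- specialize (H1 l ltac:(lia)); lia.
        -- specialize (H1 j ltac:(lia)); lia.
        -- apply H2; lia.
      * intros i Hi Pi. destruct (Nat.eq_dec i n) as [->|Hne].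
        -- exists d. rewrite Nat.eqb_refl. split; auto.
        -- destruct (H3 i ltac:(lia) Pi) as [j [Hj Hg]]. exists j. destruct (Nat.eqb_spec j d); [lia|]. split; auto.
    + exists d, g. split; [|split].
      * intros j Hj. specialize (H1 j Hj). split; [lia|tauto].
      * auto.
      * intros i Hi Pi. destruct (Nat.eq_dec i n) as [->|Hne]; [contradiction|]. apply H3; auto; lia.
Qed.

Lemma vertex_zero q a M y dy : 0 < a -> null_set (fun x => 0 <= x <= a /\ M < Rabs (q x)) ->
  edge_problem_nontrivial q a -> edge_sol q a y dy -> dy a = 0 -> y 0 = 0.
Proof.
  intros Ha HM [z [dz [Hz [Hz0 [Hdz [x0 [Hx0 Hzx]]]]]]] Hy Hdy.
  assert (Hza : z a <> 0).
  { intro E. apply Hzx. apply (uniq q z dz a M a Ha HM Hz ltac:(lra) E Hdz x0 Hx0). }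
  assert (L := edge_sol_lin _ _ _ _ _ _ (z a) (- y a) Hy Hz).
  destruct (uniq q _ _ a M a Ha HM L ltac:(lra) ltac:(cbv beta; ring) ltac:(cbv beta; rewrite Hdy, Hdz; ring) 0 ltac:(lra)) as [E _].
  cbv beta in E. rewrite Hz0 in E.
  apply (Rmult_eq_reg_l (z a)); auto. lra.
Qed.

Lemma dir_back (n : nat) (a : nat -> R) (Q : nat -> R -> R) (m : nat) :
  (exists f : nat -> nat,
      (forall k, (k < S m)%nat -> (f k < n)%nat) /\
      (forall k l, (k < S m)%nat -> (l < S m)%nat -> f k = f l -> k = l) /\
      (forall k, (k < S m)%nat -> edge_problem_nontrivial (Q (f k)) (a (f k)))) ->
  (exists psis : nat -> nat -> R -> R,
      (forall k, (k < m)%nat -> graph_sol n a Q (psis k)) /\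
      lin_indep n a m psis).
Proof.
  intros [f [Hf1 [Hf2 Hf3]]].
  destruct (fchoice ((fun _ : R => 0), (fun _ : R => 0), 0)
    (fun k (y : (R -> R) * (R -> R) * R) => edge_sol (Q (f k)) (a (f k)) (fst (fst y)) (snd (fst y)) /\
       fst (fst y) 0 = 0 /\ snd (fst y) (a (f k)) = 0 /\ 0 <= snd y <= a (f k) /\ fst (fst y) (snd y) <> 0) (S m))
    as [F HF].
  { intros k Hk. destruct (Hf3 k Hk) as [z [dz [H1 [H2 [H3 [x [H4 H5]]]]]]]. exists (z, dz, x); simpl; auto. }
  set (Z := fun k => fst (fst (F k))). set (DZ := fun k => snd (fst (F k))). set (X := fun k => snd (F k)).
  set (w := fun k => DZ k 0).
  assert (Hj : exists j, (j < S m)%nat /\ (w j <> 0 \/ forall k, (k < S m)%nat -> w k = 0)).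
  { destruct (classic (exists k, (k < S m)%nat /\ w k <> 0)) as [[j [Hj Hw]]|Hall].
    - exists j; auto.
    - exists 0%nat. split; [lia|]. right. intros k Hk. apply NNPP; intro Hn. apply Hall; eauto. }
  destruct Hj as [j [Hj Hwj]].
  set (sg := fun r => if (r <? j)%nat then r else S r).
  assert (Hsg1 : forall r, (r < m)%nat -> (sg r < S m)%nat) by (intros r Hr; unfold sg; destruct (Nat.ltb_spec r j); lia).
  assert (Hsg2 : forall r, sg r <> j) by (intros r; unfold sg; destruct (Nat.ltb_spec r j); lia).
  assert (Hsg3 : forall r r', sg r = sg r' -> r = r') by (intros r r'; unfold sg; destruct (Nat.ltb_spec r j), (Nat.ltb_spec r' j); lia).
  set (t := fun r => w (sg r) / w j).
  set (C := fun r k => (if (k =? sg r)%nat then 1 else 0) - t r * (if (k =? j)%nat then 1 else 0)).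
  exists (fun r i x => sumR (fun k => C r k * (if (i =? f k)%nat then Z k x else 0)) (S m)).
  split.
  - intros r Hr.
    exists (fun i x => sumR (fun k => C r k * (if (i =? f k)%nat then DZ k x else 0)) (S m)).
    split; [|split; [|split]].
    + intros i Hi.
      apply (edge_sol_sum (Q i) (a i) (fun k x => if (i =? f k)%nat then Z k x else 0)
        (fun k x => if (i =? f k)%nat then DZ k x else 0) (C r) (S m)).
      intros k Hk. destruct (Nat.eqb_spec i (f k)) as [->|Hne].
      * destruct (HF k Hk) as [H _]. exact H.
      * apply edge_sol_zero.
    + intros i i' Hi Hi'. transitivity 0; [|symmetry]; apply sumR_zero; intros k Hk; destruct (HF k Hk) as [_ [H0 _]];
        fold (Z k) in H0; destruct (_ =? _)%nat; rewrite ?H0; ring.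
    + rewrite sumR_swap.
      rewrite (sumR_ext _ (fun k => (if (k =? sg r)%nat then w k else 0) + (- t r) * (if (k =? j)%nat then w k else 0))).
      2:{ intros k Hk. idtac.
          rewrite sumR_scal. rewrite (sumR_single _ n (f k)); auto.
          2:{ intros i Hi Hne. rewrite (proj2 (Nat.eqb_neq _ _) Hne). auto. }
          rewrite Nat.eqb_refl. unfold C, w. destruct (k =? sg r)%nat, (k =? j)%nat; ring. }
      rewrite sumR_plus, sumR_scal.
      rewrite (sumR_single _ _ (sg r)); auto.
      2:{ intros k Hk Hne. rewrite (proj2 (Nat.eqb_neq _ _) Hne). auto. }
      rewrite (sumR_single _ _ j); auto.
      2:{ intros k Hk Hne. rewrite (proj2 (Nat.eqb_neq _ _) Hne). auto. }
      rewrite !Nat.eqb_refl. unfold t. destruct Hwj as [Hw|Hw].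
      * field; auto.
      * rewrite (Hw (sg r)) by auto. rewrite (Hw j) by auto. unfold Rdiv; ring.
    + intros i Hi. apply sumR_zero. intros k Hk. destruct (Nat.eqb_spec i (f k)) as [->|]; [|ring].
      destruct (HF k Hk) as [_ [_ [H _]]]. fold (DZ k) in H. rewrite H; ring.
  - intros b Hb r Hr.
    set (k0 := sg r).
    destruct (HF k0 (Hsg1 r Hr)) as [_ [_ [_ [Hx Hzx]]]]. fold (Z k0) (X k0) in Hx, Hzx.
    specialize (Hb (f k0) (X k0) (Hf1 k0 (Hsg1 r Hr)) Hx).
    rewrite (sumR_ext _ (fun r' => b r' * ((if (r' =? r)%nat then 1 else 0) * Z k0 (X k0)))) in Hb.
    2:{ intros r' Hr'. f_equal. rewrite (sumR_single _ _ k0); [| apply Hsg1; auto |].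
        - rewrite Nat.eqb_refl. unfold C. rewrite (proj2 (Nat.eqb_neq k0 j) (Hsg2 r)).
          destruct (Nat.eqb_spec k0 (sg r')) as [E1|E1], (Nat.eqb_spec r' r) as [E2|E2]; try ring.
          + exfalso. apply E2. apply Hsg3. unfold k0 in E1. auto.
          + subst. exfalso; auto.
        - intros k Hk Hne. destruct (Nat.eqb_spec (f k0) (f k)); [|ring].
          exfalso. apply Hne. symmetry. apply Hf2; auto. apply Hsg1; auto. }
    rewrite (sumR_single _ _ r) in Hb; auto.
    2:{ intros k Hk Hne. rewrite (proj2 (Nat.eqb_neq _ _) Hne). ring. }
    rewrite Nat.eqb_refl in Hb.
    apply (Rmult_eq_reg_r (Z k0 (X k0))); auto. lra.
Qed.

Lemma dir_fwd (n : nat) (a : nat -> R) (Q : nat -> R -> R) (m : nat)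
  (Ha : forall i, (i < n)%nat -> 0 < a i)
  (HQ : forall i, (i < n)%nat -> Linf_on (a i) (Q i))
  (Hm : (2 <= m)%nat) :
  (exists psis : nat -> nat -> R -> R,
      (forall k, (k < m)%nat -> graph_sol n a Q (psis k)) /\
      lin_indep n a m psis) ->
  (exists f : nat -> nat,
      (forall k, (k < S m)%nat -> (f k < n)%nat) /\
      (forall k l, (k < S m)%nat -> (l < S m)%nat -> f k = f l -> k = l) /\
      (forall k, (k < S m)%nat -> edge_problem_nontrivial (Q (f k)) (a (f k)))).
Proof.
  intros [psis [Hs Hind]]. apply NNPP; intro Hnot.
  destruct (fchoice (fun _ _ => 0) (fun k dpsi =>
    (forall i, (i < n)%nat -> edge_sol (Q i) (a i) (psis k i) (dpsi i)) /\
    (forall i j, (i < n)%nat -> (j < n)%nat -> psis k i 0 = psis k j 0) /\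
    sumR (fun i => dpsi i 0) n = 0 /\
    (forall j, (j < n)%nat -> dpsi j (a j) = 0)) m Hs) as [dps Hdps].
  assert (HM : forall i, (i < n)%nat -> exists M, null_set (fun x => 0 <= x <= a i /\ M < Rabs (Q i x))).
  { intros i Hi. destruct (HQ i Hi) as [_ H]. exact H. }
  set (P := fun i => edge_problem_nontrivial (Q i) (a i)).
  destruct (enum P n) as [d [g [Hg1 [Hg2 Hg3]]]].
  assert (Hdm : (d <= m)%nat).
  { destruct (Nat.le_gt_cases d m) as [|Hlt]; auto. exfalso. apply Hnot. exists g.
    split; [|split].
    - intros k Hk. apply Hg1; lia.
    - intros k l Hk Hl. apply Hg2; lia.
    - intros k Hk. apply Hg1; lia. }
  assert (Comb : forall c : nat -> R,
    let Psi := fun i x => sumR (fun k => c k * psis k i x) m in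
    let dPsi := fun i x => sumR (fun k => c k * dps k i x) m in
    (forall i, (i < n)%nat -> edge_sol (Q i) (a i) (Psi i) (dPsi i)) /\
    (forall i j, (i < n)%nat -> (j < n)%nat -> Psi i 0 = Psi j 0) /\
    sumR (fun i => dPsi i 0) n = 0 /\
    (forall j, (j < n)%nat -> dPsi j (a j) = 0)).
  { intros c Psi dPsi. split; [|split; [|split]].
    - intros i Hi. apply (edge_sol_sum _ _ (fun k => psis k i) (fun k => dps k i)).
      intros k Hk. destruct (Hdps k Hk) as [H _]. auto.
    - intros i j Hi Hj. unfold Psi. apply sumR_ext. intros k Hk. destruct (Hdps k Hk) as [_ [H _]]. rewrite (H i j); auto.
    - unfold dPsi. rewrite sumR_swap. apply sumR_zero. intros k Hk. rewrite sumR_scal.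
      destruct (Hdps k Hk) as [_ [_ [H _]]]. rewrite H; ring.
    - intros j Hj. unfold dPsi. apply sumR_zero. intros k Hk. destruct (Hdps k Hk) as [_ [_ [_ H]]]. rewrite H; auto; ring. }
  assert (Triv : forall i z dz, (i < n)%nat -> ~ P i -> edge_sol (Q i) (a i) z dz -> z 0 = 0 -> dz (a i) = 0 ->
     forall x, 0 <= x <= a i -> z x = 0).
  { intros i z dz Hi HP Hz Hz0 Hdz x Hx. apply NNPP; intro Hne. apply HP. exists z, dz. split; [auto|split; [auto|split; [auto|exists x; split; auto]]]. }
  destruct d as [|d'].
  - destruct (dep m 1 ltac:(lia) (fun k _ => psis k 0%nat 0)) as [c [[k0 [Hk0 Hc0]] Hc]].
    apply Hc0. apply (Hind c); auto.
    intros i x Hi Hx.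
    destruct (Comb c) as [C1 [C2 [C3 C4]]].
    apply (Triv i (fun x => sumR (fun k => c k * psis k i x) m) (fun x => sumR (fun k => c k * dps k i x) m) Hi); auto.
    + intros HP. destruct (Hg3 i Hi HP) as [j [Hj _]]. lia.
    + rewrite (C2 i 0%nat); auto; [|lia]. apply (Hc 0%nat); lia.
  - set (is := g d').
    assert (His : (is < n)%nat /\ P is) by (apply Hg1; lia).
    destruct (dep m d' ltac:(lia) (fun k j => psis k (g j) (a (g j)))) as [c [[k0 [Hk0 Hc0]] Hc]].
    apply Hc0. apply (Hind c); auto.
    destruct (Comb c) as [C1 [C2 [C3 C4]]].
    set (Psi := fun i x => sumR (fun k => c k * psis k i x) m) in *.
    set (dPsi := fun i x => sumR (fun k => c k * dps k i x) m) in *.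
    assert (Hv : Psi is 0 = 0).
    { destruct (HM is (proj1 His)) as [M HMi].
      apply (vertex_zero (Q is) (a is) M (Psi is) (dPsi is)); auto.
      - apply Ha, His.
      - apply His.
      - apply C1, His.
      - apply C4, His. }
    assert (Hoth : forall i, (i < n)%nat -> i <> is -> forall x, 0 <= x <= a i -> Psi i x = 0 /\ dPsi i x = 0).
    { intros i Hi Hne.
      destruct (HM i Hi) as [M HMi].
      assert (Hai : Psi i (a i) = 0).
      { destruct (classic (P i)) as [HP|HP].
        - destruct (Hg3 i Hi HP) as [j [Hj Hgj]].
          assert (j <> d') by (intro; subst; auto).
          rewrite <- Hgj. apply (Hc j). lia.
        - apply (Triv i _ _ Hi HP (C1 i Hi)).
          + rewrite (C2 i is); auto. apply His.
          + apply C4; auto.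
          + pose proof (Ha i Hi); lra. }
      apply (uniq (Q i) (Psi i) (dPsi i) (a i) M (a i) (Ha i Hi) HMi (C1 i Hi)); auto.
      + pose proof (Ha i Hi); lra.
      + apply C4; auto. }
    assert (Hd0 : dPsi is 0 = 0).
    { rewrite <- (sumR_single (fun i => dPsi i 0) n is); [exact C3|apply His|].
      intros i Hi Hne. apply (Hoth i Hi Hne). pose proof (Ha i Hi); lra. }
    intros i x Hi Hx.
    destruct (Nat.eq_dec i is) as [->|Hne].
    + destruct (HM is (proj1 His)) as [M HMi].
      apply (uniq (Q is) (Psi is) (dPsi is) (a is) M 0 (Ha is (proj1 His)) HMi (C1 is (proj1 His))); auto.
      pose proof (Ha is (proj1 His)); lra.
    + apply (Hoth i Hi Hne x Hx).
Qed.

Theorem proposition1 (n : nat) (a : nat -> R) (Q : nat -> R -> R) (m : nat)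
  (Ha : forall i, (i < n)%nat -> 0 < a i)
  (HQ : forall i, (i < n)%nat -> Linf_on (a i) (Q i))
  (Hm : (2 <= m)%nat) :
  (exists psis : nat -> nat -> R -> R,
      (forall k, (k < m)%nat -> graph_sol n a Q (psis k)) /\
      lin_indep n a m psis)
  <->
  (exists f : nat -> nat,
      (forall k, (k < S m)%nat -> (f k < n)%nat) /\
      (forall k l, (k < S m)%nat -> (l < S m)%nat -> f k = f l -> k = l) /\
      (forall k, (k < S m)%nat -> edge_problem_nontrivial (Q (f k)) (a (f k)))).
Proof.
  split; [apply dir_fwd; auto | apply dir_back].
Qed.
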